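(* Let $R>0$. Every $\alpha\in(0,\frac{1}{8R}]$ satisfies $1-3\alpha R-\alpha^2R^2-\alpha^3R^3\ge 0$ and $1-8\alpha R+\alpha^2R^2-2\alpha^3R^3\ge 0$. Moreover, let $\mathbf L\colon\mathbb R^n\times\mathbb R^m\to\mathbb R$ be an $R$-smooth convex-concave function with a saddle point $\mathbf z^\star$, let $\mathbf z^0\in\mathbb R^n\times\mathbb R^m$, and let $\alpha=\frac{1}{8R}$ in the EAG-C iteration $$\mathbf z^{k+1/2}=\mathbf z^k+\tfrac{1}{k+2}(\mathbf z^0-\mathbf z^k)-\alpha\,\mathbf G(\mathbf z^k),\qquad \mathbf z^{k+1}=\mathbf z^k+\tfrac{1}{k+2}(\mathbf z^0-\mathbf z^k)-\alpha\,\mathbf G(\mathbf z^{k+1/2}),\quad k\ge0.$$ Then for all $k\ge 0$, $$\|\nabla\mathbf L(\mathbf z^k)\|^2\le\frac{260R^2\|\mathbf z^0-\mathbf z^\star\|^2}{(k+1)^2}.$$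
   Context: Write $\mathbf z=(\mathbf x,\mathbf y)$. $\mathbf L$ convex-concave: convex in $\mathbf x$ for fixed $\mathbf y$, concave in $\mathbf y$ for fixed $\mathbf x$. A saddle point $(\mathbf x^\star,\mathbf y^\star)$ satisfies $\mathbf L(\mathbf x^\star,\mathbf y)\le\mathbf L(\mathbf x^\star,\mathbf y^\star)\le\mathbf L(\mathbf x,\mathbf y^\star)$ for all $\mathbf x,\mathbf y$. $\mathbf G(\mathbf z)=(\nabla_{\mathbf x}\mathbf L(\mathbf x,\mathbf y),-\nabla_{\mathbf y}\mathbf L(\mathbf x,\mathbf y))$; $\mathbf L$ is $R$-smooth if it is differentiable and $\mathbf G$ is $R$-Lipschitz. *)

(* Defs.v *)
From HB Require Import structures.
From mathcomp Require Import all_boot all_order all_algebra.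
From mathcomp Require Import all_classical all_reals all_analysis.
Set Implicit Arguments. Unset Strict Implicit. Unset Printing Implicit Defensive.
Import Order.TTheory GRing.Theory Num.Theory.
Import numFieldNormedType.Exports.
Local Open Scope ring_scope.

Section Defs.
Variable R : realType.

Definition dotv (k : nat) (u v : 'rV[R]_k) : R := \sum_(i < k) u 0 i * v 0 i.

Definition zpt (n m : nat) := ('rV[R]_n * 'rV[R]_m)%type.

Definition zadd n m (z w : zpt n m) : zpt n m := (z.1 + w.1, z.2 + w.2).
Definition zsub n m (z w : zpt n m) : zpt n m := (z.1 - w.1, z.2 - w.2).
Definition zscale n m (a : R) (z : zpt n m) : zpt n m := (a *: z.1, a *: z.2).

Definition zsqnorm n m (z : zpt n m) : R := dotv z.1 z.1 + dotv z.2 z.2.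
Definition znorm n m (z : zpt n m) : R := Num.sqrt (zsqnorm z).

Fixpoint eagc n m (G : zpt n m -> zpt n m) (a : R) (z0 : zpt n m) (k : nat)
  : zpt n m :=
  match k with
  | 0 => z0
  | k'.+1 =>
      let zk := eagc G a z0 k' in
      let base := zadd zk (zscale (k'.+2%:R)^-1 (zsub z0 zk)) in
      let zhalf := zsub base (zscale a (G zk)) in
      zsub base (zscale a (G zhalf))
  end.
End Defs.

(* Main.v *)
Require Import Defs.
From HB Require Import structures.
From mathcomp Require Import all_boot all_order all_algebra.
From mathcomp Require Import all_classical all_reals all_analysis.
Import Order.TTheory GRing.Theory Num.Theory.
Import numFieldNormedType.Exports.
Local Open Scope ring_scope.
From mathcomp Require Import ring lra.
Local Open Scope classical_set_scope.

Lemma dir_le (R : realType) (V : normedModType R) (f : V -> R) (z v : V) (C : R) :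
  differentiable f z ->
  (forall t : R, 0 < t -> t <= 1 -> f (t *: v + z) - f z <= t * C) ->
  'd f z v <= C.
Proof.
move=> df H.
rewrite -deriveE //.
have dv : derivable f z v := diff_derivable df. move: (dv); rewrite /derivable => dv2.
rewrite /derive (cvg_at_rightE _ _ dv2).
apply: limr_le.
  apply/cvg_ex; exists (lim ((fun h : R => h^-1 *: ((f \o shift z) (h *: v) - f z)) @ 0^')).
  move=> A /dv2 /nbhs_ballP [_ /posnumP[e] xe_A].
  by exists e%:num => //= y xe_y; rewrite lt_def => /andP [xney _]; apply: xe_A.
exists 1 => //= t t1 t0.
have {t1}: `|t| < 1 by move: t1; rewrite /ball /= sub0r normrN.
move=> t1.
have t1' : t <= 1 by rewrite ltW // (le_lt_trans (ler_norm t)).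
rewrite /= ler_pdivrMl //.
by have := H t t0 t1'; rewrite /shift /= addrC.
Qed.

Lemma dir_ge (R : realType) (V : normedModType R) (f : V -> R) (z v : V) (C : R) :
  differentiable f z ->
  (forall t : R, 0 < t -> t <= 1 -> t * C <= f (t *: v + z) - f z) ->
  C <= 'd f z v.
Proof.
move=> df H.
rewrite -deriveE //.
have dv : derivable f z v := diff_derivable df. move: (dv); rewrite /derivable => dv2.
rewrite /derive (cvg_at_rightE _ _ dv2).
apply: limr_ge.
  apply/cvg_ex; exists (lim ((fun h : R => h^-1 *: ((f \o shift z) (h *: v) - f z)) @ 0^')).
  move=> A /dv2 /nbhs_ballP [_ /posnumP[e] xe_A].
  by exists e%:num => //= y xe_y; rewrite lt_def => /andP [xney _]; apply: xe_A.
exists 1 => //= t t1 t0.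
have {t1}: `|t| < 1 by move: t1; rewrite /ball /= sub0r normrN.
move=> t1.
have t1' : t <= 1 by rewrite ltW // (le_lt_trans (ler_norm t)).
rewrite /= ler_pdivlMl //.
by have := H t t0 t1'; rewrite /shift /= addrC.
Qed.


Section IP.
Context {R : realType} {n m : nat}.
Local Notation T := ('rV[R]_n * 'rV[R]_m)%type.

Lemma dotvC k (u v : 'rV[R]_k) : dotv u v = dotv v u.
Proof. by apply: eq_bigr => i _; rewrite mulrC. Qed.
Lemma dotvDl k (u v w : 'rV[R]_k) : dotv (u + v) w = dotv u w + dotv v w.
Proof. by rewrite /dotv -big_split; apply: eq_bigr => i _; rewrite mxE mulrDl. Qed.
Lemma dotvZl k a (u w : 'rV[R]_k) : dotv (a *: u) w = a * dotv u w.
Proof. by rewrite /dotv mulr_sumr; apply: eq_bigr => i _; rewrite mxE mulrA. Qed.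
Lemma dotvNl k (u w : 'rV[R]_k) : dotv (- u) w = - dotv u w.
Proof. by rewrite -scaleN1r dotvZl mulN1r. Qed.
Lemma dotv_ge0 k (u : 'rV[R]_k) : 0 <= dotv u u.
Proof. by apply: sumr_ge0 => i _; rewrite -expr2 sqr_ge0. Qed.
Lemma dotv_eq0 k (u : 'rV[R]_k) : dotv u u = 0 -> u = 0.
Proof.
move=> /eqP; rewrite psumr_eq0; last by move=> i _; rewrite -expr2 sqr_ge0.
move=> /allP H; apply/rowP => i; rewrite mxE.
have := H i (mem_index_enum i); rewrite implyTb mulf_eq0 orbb.
by move/eqP.
Qed.

Definition ip (z w : T) : R := dotv z.1 w.1 + dotv z.2 w.2.
Lemma ipC z w : ip z w = ip w z.
Proof. by rewrite /ip dotvC [dotv z.2 _]dotvC. Qed.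
Lemma ipDl z w v : ip (z + w) v = ip z v + ip w v.
Proof. by rewrite /ip /= !dotvDl addrACA. Qed.
Lemma ipZl a z v : ip (a *: z) v = a * ip z v.
Proof. by rewrite /ip /= !dotvZl mulrDr. Qed.
Lemma ipNl z v : ip (- z) v = - ip z v.
Proof. by rewrite /ip /= !dotvNl opprD. Qed.
Lemma ipBl z w v : ip (z - w) v = ip z v - ip w v.
Proof. by rewrite ipDl ipNl. Qed.
Lemma ipDr z w v : ip v (z + w) = ip v z + ip v w.
Proof. by rewrite ipC ipDl !(ipC v). Qed.
Lemma ipZr a z v : ip v (a *: z) = a * ip v z.
Proof. by rewrite ipC ipZl ipC. Qed.
Lemma ipNr z v : ip v (- z) = - ip v z.
Proof. by rewrite ipC ipNl ipC. Qed.
Lemma ipBr z w v : ip v (z - w) = ip v z - ip v w.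
Proof. by rewrite ipDr ipNr. Qed.
Lemma dotvDr k (u v w : 'rV[R]_k) : dotv w (u + v) = dotv w u + dotv w v.
Proof. by rewrite dotvC dotvDl !(dotvC _ w). Qed.
Lemma dotvNr k (u w : 'rV[R]_k) : dotv w (- u) = - dotv w u.
Proof. by rewrite dotvC dotvNl dotvC. Qed.
Lemma dotvZr k a (u w : 'rV[R]_k) : dotv w (a *: u) = a * dotv w u.
Proof. by rewrite dotvC dotvZl dotvC. Qed.
Lemma dotv0r k (u : 'rV[R]_k) : dotv u 0 = 0.
Proof. by rewrite -(scale0r 0) dotvZr mul0r. Qed.
Lemma ip_sq c (g d : T) : ip (c *: g + d) (c *: g + d) = c * c * ip g g + 2 * c * ip g d + ip d d.
Proof. rewrite !(ipDl, ipDr, ipZl, ipZr) (ipC d g); ring. Qed.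
Lemma ip_ge0 z : 0 <= ip z z.
Proof. by rewrite addr_ge0 // dotv_ge0. Qed.

Lemma zsubE (z w : zpt R n m) : zsub z w = z - w. Proof. by []. Qed.
Lemma zaddE (z w : zpt R n m) : zadd z w = z + w. Proof. by []. Qed.
Lemma zscaleE a (z : zpt R n m) : zscale a z = a *: z. Proof. by []. Qed.
Lemma zsqnormE (z : zpt R n m) : zsqnorm z = ip z z. Proof. by []. Qed.

Lemma step (Q : R) (z0 zk g h g2 : T) : 2 <= Q ->
  0 <= ip (g2 - g) ((zk + Q^-1 *: (z0 - zk) - h) - zk) ->
  ip (g2 - h) (g2 - h) <= 64^-1 * ip ((zk + Q^-1 *: (z0 - zk) - h) - (zk + Q^-1 *: (z0 - zk) - g))
                                     ((zk + Q^-1 *: (z0 - zk) - h) - (zk + Q^-1 *: (z0 - zk) - g)) ->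
  Q*(2*Q+1)/4 * ip g2 g2 + Q * ip g2 ((zk + Q^-1 *: (z0 - zk) - h) - z0)
    <= (Q-1)*(2*Q-1)/4 * ip g g + (Q-1) * ip g (zk - z0).
Proof.
move=> Q2.
set u := zk - z0.
have E1 : zk + Q^-1 *: (z0 - zk) - h - zk = - (Q^-1 *: u) - h.
  by rewrite /u -scalerN opprB addrAC [zk + _]addrC addrK.
have E2 : zk + Q^-1 *: (z0 - zk) - h - z0 = u - Q^-1 *: u - h.
  by rewrite /u -scalerN opprB addrAC [zk + _ - z0]addrAC.
have E3 : zk + Q^-1 *: (z0 - zk) - h - (zk + Q^-1 *: (z0 - zk) - g) = g - h.
  by rewrite opprB addrC addrA addrNK.
rewrite E1 E2 E3 => M L; clear E1 E2 E3; rewrite /u in M L *; clear u.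
have S1 := ip_ge0 ((6*Q-1) *: g2 - (6*Q) *: h).
have S2 := ip_ge0 ((15*Q^+2-24*Q+8) *: g - (Q*(15*Q-16)) *: h).
have S3 := ip_ge0 h.
move: M L S1 S2 S3.
rewrite !(ipDl, ipDr, ipBl, ipBr, ipNl, ipNr, ipZl, ipZr).
rewrite ?(ipC h g) ?(ipC g2 g) ?(ipC g2 h) ?(ipC u g) ?(ipC u h) ?(ipC u g2).
move=> M L S1 S2 S3.
have Q0 : Q != 0 by apply/eqP => Q0; rewrite Q0 in Q2; lra.
have W0 : 0 < 15*Q^+2-24*Q+8 by nra.
have C0 : 0 < 32*(15*Q^+2-24*Q+8)*(6*Q-1) by apply: mulr_gt0; [apply: mulr_gt0 => //|]; lra.
have key : 32*(15*Q^+2-24*Q+8)*(6*Q-1) * (((Q - 1) * (2 * Q - 1) / 4 * ip g g + (Q - 1) * (ip g zk - ip g z0)) - (Q * (2 * Q + 1) / 4 * ip g2 g2 +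
  Q * (ip g2 zk - ip g2 z0 - Q^-1 * (ip g2 zk - ip g2 z0) - ip h g2))) =
    32*(15*Q^+2-24*Q+8)*(6*Q-1) * ((Q-1)*Q*(- (Q^-1 * (ip g2 zk - ip g2 z0)) - ip h g2 - (- (Q^-1 * (ip g zk - ip g z0)) - ip g h)) + 2*Q^+2*((64^-1 * (ip g g - ip g h + (- ip g h - - ip h h))) - (ip g2 g2 - ip h g2 + (- ip h g2 - - ip h h))))
    + 8*Q*(15*Q^+2-24*Q+8)*((6 * Q - 1) * ((6 * Q - 1) * ip g2 g2 - 6 * Q * ip h g2) + ((6 * Q - 1) * - (6 * Q * ip h g2) - 6 * Q * - (6 * Q * ip h h))) + (6*Q-1)*((15 * Q ^+ 2 - 24 * Q + 8) *
  ((15 * Q ^+ 2 - 24 * Q + 8) * ip g g - Q * (15 * Q - 16) * ip g h) +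
  ((15 * Q ^+ 2 - 24 * Q + 8) * - (Q * (15 * Q - 16) * ip g h) -
   Q * (15 * Q - 16) * - (Q * (15 * Q - 16) * ip h h))) + 8*Q^+2*(27*Q-31)*ip h h
    by field.
rewrite -subr_ge0 -(pmulr_rge0 _ C0) key.
have Lg : 0 <= (64^-1 * (ip g g - ip g h + (- ip g h - - ip h h))) - (ip g2 g2 - ip h g2 + (- ip h g2 - - ip h h)) by rewrite subr_ge0.
have P1 : 0 <= (Q - 1) * Q by apply: mulr_ge0; lra.
have P2 : 0 <= 8 * Q * (15 * Q ^+ 2 - 24 * Q + 8) by apply: mulr_ge0; [|lra]; lra.
have P3 : 0 <= 8 * Q^+2 * (27 * Q - 31) by apply: mulr_ge0; [apply: mulr_ge0|]; try lra; rewrite sqr_ge0.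
have P0 : 0 <= 2 * Q^+2 by apply: mulr_ge0 => //; rewrite sqr_ge0.
have P4 : 0 <= 6 * Q - 1 by lra.
exact: (addr_ge0 (addr_ge0 (addr_ge0 (mulr_ge0 (ltW C0) (addr_ge0 (mulr_ge0 P1 M) (mulr_ge0 P0 Lg))) (mulr_ge0 P2 S1)) (mulr_ge0 P4 S2)) (mulr_ge0 P3 S3)).
Qed.

Definition Hdiff (L : T -> R) (gx : T -> 'rV[R]_n) (gy : T -> 'rV[R]_m) :=
  forall z, differentiable L z /\
        forall h : T, 'd L z h = dotv (gx z) h.1 + dotv (gy z) h.2.

Lemma fo_x (L : T -> R) gx gy (Hd : Hdiff L gx gy)
  (Hcx : forall (y : 'rV[R]_m) (x1 x2 : 'rV[R]_n) (t : R), 0 <= t -> t <= 1 ->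
        L (t *: x1 + (1 - t) *: x2, y) <= t * L (x1, y) + (1 - t) * L (x2, y))
  x y x' : dotv (gx (x, y)) (x' - x) <= L (x', y) - L (x, y).
Proof.
have [dz df] := Hd (x, y).
have := @dir_le R T L (x, y) (x' - x, 0) (L (x', y) - L (x, y)) dz.
rewrite df /= dotv0r addr0; apply => t t0 t1.
have -> : t *: ((x' - x, 0) : T) + (x, y) = (t *: x' + (1 - t) *: x, y).
  apply: injective_projections => /=; last by rewrite scaler0 add0r.
  by rewrite scalerBr scalerBl scale1r addrA addrAC.
have := Hcx y x' x t (ltW t0) t1.
lra.
Qed.

Lemma fo_y (L : T -> R) gx gy (Hd : Hdiff L gx gy)
  (Hcv : forall (x : 'rV[R]_n) (y1 y2 : 'rV[R]_m) (t : R), 0 <= t -> t <= 1 ->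
        t * L (x, y1) + (1 - t) * L (x, y2) <= L (x, t *: y1 + (1 - t) *: y2))
  x y y' : L (x, y') - L (x, y) <= dotv (gy (x, y)) (y' - y).
Proof.
have [dz df] := Hd (x, y).
have := @dir_ge R T L (x, y) (0, y' - y) (L (x, y') - L (x, y)) dz.
rewrite df /= dotv0r add0r; apply => t t0 t1.
have -> : t *: ((0, y' - y) : T) + (x, y) = (x, t *: y' + (1 - t) *: y).
  apply: injective_projections => /=; first by rewrite scaler0 add0r.
  by rewrite scalerBr scalerBl scale1r addrA addrAC.
have := Hcv x y' y t (ltW t0) t1.
lra.
Qed.

Lemma mono (L : T -> R) gx gy (Hd : Hdiff L gx gy)
  (Hcx : forall (y : 'rV[R]_m) (x1 x2 : 'rV[R]_n) (t : R), 0 <= t -> t <= 1 ->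
        L (t *: x1 + (1 - t) *: x2, y) <= t * L (x1, y) + (1 - t) * L (x2, y))
  (Hcv : forall (x : 'rV[R]_n) (y1 y2 : 'rV[R]_m) (t : R), 0 <= t -> t <= 1 ->
        t * L (x, y1) + (1 - t) * L (x, y2) <= L (x, t *: y1 + (1 - t) *: y2))
  (z w : T) : 0 <= ip ((gx z, - gy z) - (gx w, - gy w)) (z - w).
Proof.
case: z => x1 y1; case: w => x2 y2.
have c1 := @fo_x _ _ _ Hd Hcx x1 y1 x2.
have c2 := @fo_x _ _ _ Hd Hcx x2 y2 x1.
have c3 := @fo_y _ _ _ Hd Hcv x1 y1 y2.
have c4 := @fo_y _ _ _ Hd Hcv x2 y2 y1.
move: c1 c2 c3 c4; rewrite /ip /= !(dotvDl, dotvNl, dotvDr, dotvNr).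
lra.
Qed.

Lemma sad (L : T -> R) gx gy (Hd : Hdiff L gx gy)
  (Hcx : forall (y : 'rV[R]_m) (x1 x2 : 'rV[R]_n) (t : R), 0 <= t -> t <= 1 ->
        L (t *: x1 + (1 - t) *: x2, y) <= t * L (x1, y) + (1 - t) * L (x2, y))
  (Hcv : forall (x : 'rV[R]_n) (y1 y2 : 'rV[R]_m) (t : R), 0 <= t -> t <= 1 ->
        t * L (x, y1) + (1 - t) * L (x, y2) <= L (x, t *: y1 + (1 - t) *: y2))
  (zs : T) (Hs : forall (x : 'rV[R]_n) (y : 'rV[R]_m),
        L (zs.1, y) <= L zs /\ L zs <= L (x, zs.2))
  (z : T) : 0 <= ip (gx z, - gy z) (z - zs).
Proof.
case: z => x y; case: zs Hs => xs ys Hs.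
have c1 := @fo_x _ _ _ Hd Hcx x y xs.
have c2 := @fo_y _ _ _ Hd Hcv x y ys.
have [c3 c4] := Hs x y.
move: c1 c2 c3 c4; rewrite /ip /= !(dotvDl, dotvNl, dotvDr, dotvNr).
lra.
Qed.

Lemma Gzs0 (L : T -> R) gx gy (Hd : Hdiff L gx gy)
  (zs : T) (Hs : forall (x : 'rV[R]_n) (y : 'rV[R]_m),
        L (zs.1, y) <= L zs /\ L zs <= L (x, zs.2)) :
  gx zs = 0 /\ gy zs = 0.
Proof.
case: zs Hs => xs ys Hs.
have [dz df] := Hd (xs, ys).
split.
  have := @dir_ge R T L (xs, ys) (- gx (xs, ys), 0) 0 dz.
  rewrite df /= dotv0r addr0 dotvNr oppr_ge0 => H.
  apply: dotv_eq0; apply/eqP; rewrite eq_le dotv_ge0 andbT; apply: H => t t0 t1.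
  have -> : t *: ((- gx (xs, ys), 0) : T) + (xs, ys) = (t *: (- gx (xs, ys)) + xs, ys).
    by apply: injective_projections => //=; rewrite scaler0 add0r.
  have [_ ] := Hs (t *: (- gx (xs, ys)) + xs) ys.
  rewrite /= mulr0; lra.
have := @dir_le R T L (xs, ys) (0, gy (xs, ys)) 0 dz.
rewrite df /= dotv0r add0r => H.
apply: dotv_eq0; apply/eqP; rewrite eq_le dotv_ge0 andbT; apply: H => t t0 t1.
have -> : t *: ((0, gy (xs, ys)) : T) + (xs, ys) = (xs, t *: gy (xs, ys) + ys).
  by apply: injective_projections => //=; rewrite scaler0 add0r.
have [H1 _] := Hs xs (t *: gy (xs, ys) + ys).
rewrite /= mulr0; lra.
Qed.

Lemma lip2 (G : T -> T) (Rs : R) (hRs : 0 < Rs)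
  (H : forall z w : T, znorm (zsub (G z : zpt R n m) (G w)) <= Rs * znorm (zsub (z : zpt R n m) w))
  (z w : T) : ip (G z - G w) (G z - G w) <= Rs^+2 * ip (z - w) (z - w).
Proof.
have := H z w; rewrite /znorm !zsubE !zsqnormE.
set a := ip _ _; set b := ip _ _ => Hab.
have a0 : 0 <= a := ip_ge0 _.
have b0 : 0 <= b := ip_ge0 _.
have sa := sqr_sqrtr a0; have sb := sqr_sqrtr b0.
have sa0 : 0 <= Num.sqrt a := sqrtr_ge0 a.
have sb0 : 0 <= Num.sqrt b := sqrtr_ge0 b.
rewrite -sa -sb; nra.
Qed.
End IP.

Local Close Scope classical_set_scope.

Theorem corollary1 (R : realType) (Rs : R) (hRs : 0 < Rs) :
  (forall a : R, 0 < a -> a <= (8 * Rs)^-1 ->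
      0 <= 1 - 3 * a * Rs - a ^+ 2 * Rs ^+ 2 - a ^+ 3 * Rs ^+ 3 /\
      0 <= 1 - 8 * a * Rs + a ^+ 2 * Rs ^+ 2 - 2 * a ^+ 3 * Rs ^+ 3) /\
  (forall (n m : nat) (L : 'rV[R]_n * 'rV[R]_m -> R)
          (gx : 'rV[R]_n * 'rV[R]_m -> 'rV[R]_n)
          (gy : 'rV[R]_n * 'rV[R]_m -> 'rV[R]_m)
          (zs z0 : 'rV[R]_n * 'rV[R]_m),
     (* L is differentiable, with gradient (gx z, gy z) at z *)
     (forall z, differentiable L z /\
        forall h : 'rV[R]_n * 'rV[R]_m,
          'd L z h = dotv (gx z) h.1 + dotv (gy z) h.2) ->
     (* convex in x for fixed y *)
     (forall (y : 'rV[R]_m) (x1 x2 : 'rV[R]_n) (t : R), 0 <= t -> t <= 1 ->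
        L (t *: x1 + (1 - t) *: x2, y) <= t * L (x1, y) + (1 - t) * L (x2, y)) ->
     (* concave in y for fixed x *)
     (forall (x : 'rV[R]_n) (y1 y2 : 'rV[R]_m) (t : R), 0 <= t -> t <= 1 ->
        t * L (x, y1) + (1 - t) * L (x, y2) <= L (x, t *: y1 + (1 - t) *: y2)) ->
     (* G(z) = (grad_x L, - grad_y L) is Rs-Lipschitz *)
     (forall z w : 'rV[R]_n * 'rV[R]_m,
        znorm (zsub ((gx z, - gy z) : zpt R n m) (gx w, - gy w))
          <= Rs * znorm (zsub (z : zpt R n m) w)) ->
     (* zs is a saddle point *)
     (forall (x : 'rV[R]_n) (y : 'rV[R]_m),
        L (zs.1, y) <= L zs /\ L zs <= L (x, zs.2)) ->
     forall k : nat,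
       let zk := eagc (fun z : zpt R n m => (gx z, - gy z)) (8 * Rs)^-1 z0 k in
       zsqnorm ((gx zk, gy zk) : zpt R n m)
         <= 260 * Rs ^+ 2 * zsqnorm (zsub (z0 : zpt R n m) zs) / (k.+1%:R) ^+ 2).
Proof.
split.
  move=> a a0 a1.
  have r1 : a * (8 * Rs) <= 1.
    by rewrite -ler_pdivlMr ?mulr_gt0 // div1r.
  have e1 : a * (8 * Rs) = 8 * (a * Rs) by ring.
  rewrite e1 in r1.
  have r0 : 0 < a * Rs by apply: mulr_gt0.
  have -> : 1 - 3 * a * Rs - a ^+ 2 * Rs ^+ 2 - a ^+ 3 * Rs ^+ 3 =
    1 - 3 * (a * Rs) - (a * Rs) * (a * Rs) - (a * Rs) * ((a * Rs) * (a * Rs)) by ring.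
  have -> : 1 - 8 * a * Rs + a ^+ 2 * Rs ^+ 2 - 2 * a ^+ 3 * Rs ^+ 3 =
    1 - 8 * (a * Rs) + (a * Rs) * (a * Rs) - 2 * ((a * Rs) * ((a * Rs) * (a * Rs))) by ring.
  move: (a * Rs) r0 r1 => r r0 r1.
  have q2 : 0 <= r * (1 - 8 * r) by apply: mulr_ge0; lra.
  have q1 : 0 <= r * r * (1 - 2 * r) by apply: mulr_ge0; [apply: mulr_ge0|]; lra.
  have q3 : 0 <= r * r * (1 - 8 * r) by apply: mulr_ge0; [apply: mulr_ge0|]; lra.
  split; nra.
move=> n m L gx gy zs z0 Hd Hcx Hcv Hlip Hs k; cbv zeta.
have Hd' : Hdiff L gx gy := Hd.
pose G := fun z : 'rV[R]_n * 'rV[R]_m => ((gx z, - gy z) : 'rV[R]_n * 'rV[R]_m).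
pose al := (8 * Rs)^-1.
have al0 : 0 < al by rewrite /al invr_gt0 mulr_gt0.
have Rs0 : Rs != 0 by rewrite gt_eqF.
have alR : al * Rs = 8^-1 by rewrite /al; field.
pose Gt := fun z => al *: G z.
pose Z := fun j => eagc G al z0 j.
have Mt : forall a b, 0 <= ip (Gt a - Gt b) (a - b).
  move=> a b; rewrite /Gt -scalerBr ipZl; apply: mulr_ge0; first exact: ltW.
  have := mono _ _ _ Hd' Hcx Hcv a b; rewrite /G; exact.
have Lt : forall a b, ip (Gt a - Gt b) (Gt a - Gt b) <= 64^-1 * ip (a - b) (a - b).
  move=> a b; rewrite /Gt -scalerBr ipZl ipZr mulrA.
  have := lip2 G Rs hRs Hlip a b => H.
  have -> : 64^-1 = al * al * Rs^+2 by rewrite expr2 mulrACA alR; field.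
  by rewrite -[al * al * Rs^+2 * _]mulrA ler_pM2l ?mulr_gt0.
pose A := fun p : R => p * (2 * p + 1) / 4.
pose V := fun j : nat => A j.+1%:R * ip (Gt (Z j)) (Gt (Z j)) + j.+1%:R * ip (Gt (Z j)) (Z j - z0).
have HV : forall j, V j <= 3/4 * ip (Gt z0) (Gt z0).
  elim => [|j IH].
    rewrite /V /A /Z /= subrr -(scale0r 0) ipZr.
    by rewrite le_eqVlt; apply/orP; left; apply/eqP; field.
  apply: le_trans IH.
  pose zh := Z j + (j.+2%:R)^-1 *: (z0 - Z j) - Gt (Z j).
  have Q2 : 2 <= j.+2%:R :> R by rewrite ler_nat.
  have Hst := step j.+2%:R z0 (Z j) (Gt (Z j)) (Gt zh) (Gt (Z j.+1)) Q2 (Mt (Z j.+1) (Z j)) (Lt (Z j.+1) zh).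
  apply: le_trans Hst _.
  have e2 : j.+2%:R = j.+1%:R + 1 :> R by rewrite -addn1 natrD.
  rewrite /V /A e2; rewrite le_eqVlt; apply/orP; left; apply/eqP; ring.
have [gx0 gy0] := Gzs0 _ _ _ Hd' zs Hs.
have Gts0 : Gt zs = 0.
  by apply: injective_projections => /=; rewrite ?gx0 ?gy0 ?oppr0 scaler0.
have V0b : ip (Gt z0) (Gt z0) <= 64^-1 * ip (z0 - zs) (z0 - zs).
  by have := Lt z0 zs; rewrite Gts0 subr0.
have I1 : 0 <= ip (Gt (Z k)) (Z k - zs).
  rewrite /Gt ipZl; apply: mulr_ge0; first exact: ltW.
  exact: (sad _ _ _ Hd' Hcx Hcv zs Hs (Z k)).
have Sq := ip_ge0 ((k.+1%:R / 2) *: Gt (Z k) + (zs - z0)).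
have HVk := HV k; rewrite /V /A in HVk.
have EG : zsqnorm ((gx (Z k), gy (Z k)) : zpt R n m) = ip (G (Z k)) (G (Z k)).
  by rewrite zsqnormE /ip /= dotvNl dotvNr opprK.
change (zsqnorm ((gx (Z k), gy (Z k)) : zpt R n m) <= 260 * Rs^+2 * ip (z0 - zs) (z0 - zs) / k.+1%:R^+2).
rewrite EG.
have eN : ip (Gt (Z k)) (Gt (Z k)) = al * al * ip (G (Z k)) (G (Z k)) by rewrite /Gt ipZl ipZr mulrA.
have ED : Z k - z0 = (Z k - zs) + (zs - z0) by rewrite addrA subrK.
have EDD : ip (zs - z0) (zs - z0) = ip (z0 - zs) (z0 - zs) by rewrite -opprB ipNl ipNr opprK.
rewrite ED ipDr in HVk.
rewrite ip_sq EDD in Sq.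
have K : 64 * Rs^+2 * (al * al) = 1 by rewrite /al; field.
have P0 := ip_ge0 (G (Z k)).
have D0 := ip_ge0 (z0 - zs).
move: HVk Sq I1 V0b K P0 D0; rewrite eN.
set P := ip (G (Z k)) (G (Z k)); set D := ip (z0 - zs) (z0 - zs).
set I2 := ip (Gt (Z k)) (zs - z0); set E0 := ip (Gt z0) (Gt z0).
set I1' := ip (Gt (Z k)) (Z k - zs).
set p := k.+1%:R; set N := al * al * P.
move=> HVk Sq I1 V0b K P0 D0.
have p1 : 1 <= p by rewrite /p ler1n.
have N0 : 0 <= N by rewrite /N; apply: mulr_ge0 => //; apply: mulr_ge0; apply: ltW.
have pI1 : 0 <= p * I1' by apply: mulr_ge0 => //; lra.
have pN : 0 <= p * N by apply: mulr_ge0 => //; lra.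
have key : p^+2 * N <= 259/64 * D by nra.
have eP : P = 64 * Rs^+2 * N by rewrite /N mulrA K mul1r.
rewrite eP ler_pdivlMr ?exprn_gt0 ?(lt_le_trans ltr01) //.
have R2 : 0 < Rs^+2 by rewrite exprn_gt0.
nra.
Qed.
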